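(* Let $y\in\ell^2$. Suppose that for every $q\in\mathbb Q^{<\omega}$, every rational $\varepsilon>0$ and every $m\in\omega$ there exist $n\le k$ in $\omega$ with $n\ge m$ and $k-n\ge m$ such that $\lVert (2^n y\upharpoonright[k,k+|q|)) - q\rVert_\infty<\varepsilon|q|^{-1/2}$ and $\lVert y\upharpoonright[k+|q|,\infty)\rVert_2<\varepsilon 2^{-k}$. Then $y$ is nicely hypercyclic.
   Context: $\omega=\{0,1,2,\dots\}$; $\ell^2$ is the Hilbert space of square-summable real sequences indexed by $\omega$. For a (finite or infinite) real string $s$, $\lVert s\rVert_2$ and $\lVert s\rVert_\infty$ denote its $2$-norm and sup-norm, $|s|$ its length; $y\upharpoonright[k,k+|q|)$ is regarded as a string of length $|q|$ indexed from $0$ and compared to $q$ coordinatewise; when $q$ is empty, conditions comparing an empty string to $q$ in $\lVert\cdot\rVert_\infty$ are vacuous. For nonempty $q\in\mathbb Q^{<\omega}$ and rational $\varepsilon>0$, $U_{q,\varepsilon}=\{x\in\ell^2:\lVert (x\upharpoonright|q|)-q\rVert_\infty<\varepsilon|q|^{-1/2}\text{ and }\lVert x\upharpoonright[|q|,\infty)\rVert_2<\varepsilon\}$; for $q$ empty, $U_{q,\varepsilon}=\{x:\lVert x\rVert_2<\varepsilon\}$. For $w\in\mathbb R^\omega$, $B_w(x)(i)=w(i)x(i+1)$. A function $w$ on $\omega$ is $n$-nice at $k$ if $w(i)=w(k+i)$ for all $i<n$. $B_w^k$ maps $y$ nicely into $U_{q,\varepsilon}$ if $B_w^k(y)\in U_{q,\varepsilon}$,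 $w$ is $|q|$-nice at $k$, and $\lVert y\upharpoonright[k+|q|,\infty)\rVert_2<\varepsilon 2^{-k}$. $y$ is nicely hypercyclic for $w$ if for every $U_{q,\varepsilon}$ there is $k$ such that $B_w^k$ maps $y$ nicely into $U_{q,\varepsilon}$; $y$ is nicely hypercyclic if it is nicely hypercyclic for some $w\in\{1,2\}^\omega$. *)

(* Defs.v *)
From Stdlib Require Import Reals Lra QArith Qreals List.
From Coquelicot Require Import Coquelicot.
Open Scope R_scope.

Definition seqR := nat -> R.

Definition in_l2 (x : seqR) : Prop := ex_series (fun i => (x i) ^ 2).

Definition tail_norm2 (x : seqR) (k : nat) : R :=
  sqrt (Series (fun i => (x (k + i)%nat) ^ 2)).

Definition norm2 (x : seqR) : R := tail_norm2 x 0.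

(* || (x |` [k, k+|q|)) - q ||_inf < c, written coordinatewise
   (sup of finitely many values < c iff each value < c; vacuous for q = nil). *)
Definition sup_close (x : seqR) (k : nat) (q : list Q) (c : R) : Prop :=
  forall i, (i < length q)%nat -> Rabs (x (k + i)%nat - Q2R (nth i q 0%Q)) < c.

Definition inv_sqrt_len (q : list Q) : R := / sqrt (INR (length q)).

Definition U (q : list Q) (eps : Q) (x : seqR) : Prop :=
  match q with
  | nil => norm2 x < Q2R eps
  | _ :: _ =>
      sup_close x 0 q (Q2R eps * inv_sqrt_len q) /\
      tail_norm2 x (length q) < Q2R eps
  end.

Definition Bw (w : seqR) (x : seqR) : seqR := fun i => w i * x (S i).

Definition Bw_iter (w : seqR) (k : nat) (x : seqR) : seqR := Nat.iter k (Bw w) x.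

Definition nice (w : seqR) (n k : nat) : Prop :=
  forall i, (i < n)%nat -> w i = w (k + i)%nat.

Definition maps_nicely (w : seqR) (k : nat) (y : seqR) (q : list Q) (eps : Q) : Prop :=
  U q eps (Bw_iter w k y) /\ nice w (length q) k /\
  tail_norm2 y (k + length q) < Q2R eps * / 2 ^ k.

Definition nicely_hypercyclic_for (w : seqR) (y : seqR) : Prop :=
  forall (q : list Q) (eps : Q), (0 < eps)%Q ->
    exists k : nat, maps_nicely w k y q eps.

Definition nicely_hypercyclic (y : seqR) : Prop :=
  exists w : seqR, (forall i, w i = 1 \/ w i = 2) /\ nicely_hypercyclic_for w y.

(* Main.v *)
Require Import Defs.
From Stdlib Require Import Reals QArith Qreals List Lia Lra Cantor ClassicalEpsilon.
From Coquelicot Require Import Coquelicot.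
Open Scope R_scope.

Fixpoint cnt (L : list bool) : nat :=
  match L with nil => 0%nat | b :: t => ((if b then 1 else 0) + cnt t)%nat end.

Lemma cnt_app a b : cnt (a ++ b) = (cnt a + cnt b)%nat.
Proof. induction a as [|x a IH]; simpl; [lia|rewrite IH; lia]. Qed.
Lemma cnt_rep b n : cnt (repeat b n) = if b then n else 0%nat.
Proof. induction n as [|n IH]; simpl; destruct b; simpl in *; lia. Qed.
Lemma cnt_le L : (cnt L <= length L)%nat.
Proof. induction L as [|[] L IH]; simpl; lia. Qed.

Definition fill (p : list bool) (n k : nat) : list bool :=
  p ++ repeat true (n - cnt p) ++ repeat false (k - length p - (n - cnt p)).

Definition stage (p : list bool) (nk : nat * nat) (l : nat) : list bool :=
  fill p (fst nk) (snd nk) ++ firstn l (fill p (fst nk) (snd nk)).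

Fixpoint prefx (F : nat -> nat -> nat * nat) (len : nat -> nat) (j : nat) : list bool :=
  match j with
  | O => nil
  | S j => stage (prefx F len j) (F j (length (prefx F len j) + len j + 1)%nat) (len j)
  end.

Definition Fok (F : nat -> nat -> nat * nat) : Prop :=
  forall j m, (fst (F j m) <= snd (F j m))%nat /\ (m <= fst (F j m))%nat /\
              (m <= snd (F j m) - fst (F j m))%nat.

Lemma fill_len p n k : (length p < n)%nat -> (length p <= k - n)%nat -> (n <= k)%nat ->
  length (fill p n k) = k /\ cnt (fill p n k) = n.
Proof.
  intros. unfold fill. pose proof (cnt_le p).
  rewrite !app_length, !repeat_length, !cnt_app, !cnt_rep. lia.
Qed.

Lemma pre_step F len j : Fok F ->
  let m := (length (prefx F len j) + len j + 1)%nat in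
  let n := fst (F j m) in let k := snd (F j m) in
  exists P t, prefx F len (S j) = prefx F len j ++ t /\
    prefx F len (S j) = P ++ firstn (len j) P /\ length P = k /\ cnt P = n /\
    (len j <= k)%nat /\ (length (prefx F len j) < k)%nat.
Proof.
  intros HF m n k. destruct (HF j m) as (H1 & H2 & H3).
  exists (fill (prefx F len j) n k).
  exists ((repeat true (n - cnt (prefx F len j)) ++ repeat false (k - length (prefx F len j) - (n - cnt (prefx F len j))))
           ++ firstn (len j) (fill (prefx F len j) n k)).
  destruct (fill_len (prefx F len j) n k) as [L1 L2]; try (unfold m in *; lia).
  simpl. unfold stage. fold m. fold n k. repeat split; try (unfold m in *; lia).
  unfold fill at 1. rewrite <- !app_assoc. reflexivity.
Qed.

Lemma pre_len F len j : Fok F -> (j <= length (prefx F len j))%nat.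
Proof.
  intro HF. induction j as [|j IH]; [simpl; lia|].
  destruct (pre_step F len j HF) as (P & t & E1 & E2 & L1 & C1 & L2 & L3).
  rewrite E2, app_length. lia.
Qed.

Lemma pre_prefix F len j d : Fok F -> exists t, prefx F len (j + d) = prefx F len j ++ t.
Proof.
  intro HF. induction d as [|d [t IH]].
  - exists nil. rewrite app_nil_r, Nat.add_0_r. reflexivity.
  - destruct (pre_step F len (j + d) HF) as (P & t' & E1 & _).
    exists (t ++ t'). rewrite Nat.add_succ_r, E1, IH, app_assoc. reflexivity.
Qed.

Definition wb F len (i : nat) : bool := nth i (prefx F len (S i)) false.

Lemma wb_spec F len j i : Fok F -> (i < length (prefx F len j))%nat ->
  wb F len i = nth i (prefx F len j) false.
Proof.
  intros HF Hi. unfold wb.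
  destruct (pre_prefix F len (S i) j HF) as [t1 E1].
  destruct (pre_prefix F len j (S i) HF) as [t2 E2].
  rewrite Nat.add_comm in E2. rewrite E2 in E1.
  pose proof (pre_len F len (S i) HF).
  assert (nth i (prefx F len j ++ t2) false = nth i (prefx F len (S i) ++ t1) false) by (rewrite E1; reflexivity).
  rewrite app_nth1 in H0 by lia. rewrite app_nth1 in H0 by lia. congruence.
Qed.

Fixpoint cntb (b : nat -> bool) (a k : nat) : nat :=
  match k with O => O | S k => ((if b a then 1 else 0) + cntb b (S a) k)%nat end.

Lemma cntb_list b L : forall a, (forall i, (i < length L)%nat -> b (a + i)%nat = nth i L false) ->
  cntb b a (length L) = cnt L.
Proof.
  induction L as [|x L IH]; intros a H; simpl; [reflexivity|].
  rewrite (IH (S a)).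
  - specialize (H 0%nat). rewrite Nat.add_0_r in H. simpl in H. rewrite H by lia. reflexivity.
  - intros i Hi. specialize (H (S i)). rewrite Nat.add_succ_r in H. apply H. simpl; lia.
Qed.

Lemma construct F len j : Fok F ->
  let m := (length (prefx F len j) + len j + 1)%nat in
  let n := fst (F j m) in let k := snd (F j m) in
  cntb (wb F len) 0 k = n /\ (len j <= k)%nat /\
  forall i, (i < len j)%nat -> wb F len (k + i) = wb F len i.
Proof.
  intros HF m n k.
  destruct (pre_step F len j HF) as (P & t & E1 & E2 & L1 & C1 & L2 & L3).
  fold m n k in L1, C1, L2, L3.
  assert (LS : length (prefx F len (S j)) = (k + len j)%nat).
  { rewrite E2, app_length, firstn_length_le; lia. }
  assert (HP : forall i, (i < k)%nat -> wb F len i = nth i P false).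
  { intros i Hi. rewrite (wb_spec F len (S j) i HF) by lia. rewrite E2.
    apply app_nth1. lia. }
  split; [|split; [lia|]].
  - rewrite <- C1, <- L1. apply cntb_list. intros i Hi. apply HP. lia.
  - intros i Hi. rewrite (wb_spec F len (S j) (k + i) HF) by lia.
    rewrite E2, <- L1, app_nth2_plus, nth_firstn.
    replace (Nat.ltb i (len j)) with true by (symmetry; apply Nat.ltb_lt; lia).
    rewrite HP by lia. reflexivity.
Qed.

Definition wR (b : nat -> bool) : seqR := fun i => if b i then 2 else 1.
Fixpoint prodw (w : seqR) (a k : nat) : R :=
  match k with O => 1 | S k => w a * prodw w (S a) k end.

Lemma iter_prodw w k y : forall i, Bw_iter w k y i = prodw w i k * y (i + k)%nat.
Proof.
  induction k as [|k IH]; intro i; simpl.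
  - rewrite Nat.add_0_r. ring.
  - unfold Bw_iter in *. simpl. unfold Bw at 1. rewrite IH.
    rewrite Nat.add_succ_r. simpl. ring.
Qed.

Lemma prodw_split w b c : forall a, prodw w a (b + c) = prodw w a b * prodw w (a + b) c.
Proof.
  induction b as [|b IH]; intro a; simpl.
  - rewrite Nat.add_0_r. ring.
  - rewrite IH, Nat.add_succ_r. simpl. ring.
Qed.

Lemma prodw_cnt b k : forall a, prodw (wR b) a k = 2 ^ cntb b a k.
Proof.
  induction k as [|k IH]; intro a; simpl; [reflexivity|].
  rewrite IH, pow_add. unfold wR. destruct (b a); simpl; ring.
Qed.

Lemma prodw_bound b k : forall a, 0 < prodw (wR b) a k <= 2 ^ k.
Proof.
  induction k as [|k IH]; intro a; simpl; [lra|].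
  destruct (IH (S a)). assert (0 < 2 ^ k) by (apply pow_lt; lra). set (P := prodw (wR b) (S a) k) in *. unfold wR; destruct (b a); split; nra.
Qed.

Lemma prodw_shift w c : forall a a', (forall t, (t < c)%nat -> w (a + t)%nat = w (a' + t)%nat) ->
  prodw w a c = prodw w a' c.
Proof.
  induction c as [|c IH]; intros a a' H; simpl; [reflexivity|].
  f_equal.
  - specialize (H 0%nat). rewrite !Nat.add_0_r in H. apply H. lia.
  - apply IH. intros t Ht. rewrite !Nat.add_succ_comm. apply H. lia.
Qed.

Lemma prodw_nice w L k i : nice w L k -> (i <= L)%nat -> (i <= k)%nat ->
  prodw w i k = prodw w 0 k.
Proof.
  intros Hn HiL Hik.
  replace k with (i + (k - i))%nat at 2 by lia.
  rewrite prodw_split. simpl.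
  replace k with ((k - i) + i)%nat at 1 by lia.
  rewrite prodw_split. replace (i + (k - i))%nat with k by lia.
  rewrite (prodw_shift w i k 0%nat). ring.
  intros t Ht. simpl. symmetry. apply Hn. lia.
Qed.

Lemma tail_bound b k y L : in_l2 y ->
  tail_norm2 (Bw_iter (wR b) k y) L <= 2 ^ k * tail_norm2 y (k + L).
Proof.
  intro hy. unfold tail_norm2.
  assert (Hex : ex_series (fun i => (y (k + L + i)%nat) ^ 2)).
  { apply (ex_series_incr_n (fun i => y i ^ 2)). exact hy. }
  rewrite <- (sqrt_pow2 (2 ^ k)) at 1 by (apply pow_le; lra).
  rewrite <- sqrt_mult_alt by (apply pow2_ge_0).
  apply sqrt_le_1_alt. rewrite <- Series_scal_l.
  apply Series_le.
  - intro i. rewrite iter_prodw. split; [apply pow2_ge_0|].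
    destruct (prodw_bound b k (L + i)%nat).
    replace (L + i + k)%nat with (k + L + i)%nat by lia.
    rewrite Rpow_mult_distr. apply Rmult_le_compat_r; [apply pow2_ge_0|].
    apply pow_incr. lra.
  - apply (ex_series_scal_l ((2 ^ k) ^ 2) _ Hex).
Qed.

Lemma to_nat_inj p p' : Cantor.to_nat p = Cantor.to_nat p' -> p = p'.
Proof. intro H. rewrite <- (cancel_of_to p), <- (cancel_of_to p'), H. reflexivity. Qed.

Definition code_Z (z : Z) : nat := Cantor.to_nat (Z.to_nat z, Z.to_nat (- z)).
Definition code_Q (x : Q) : nat := Cantor.to_nat (code_Z (Qnum x), Pos.to_nat (Qden x)).
Fixpoint code_L (l : list Q) : nat :=
  match l with nil => O | x :: l => S (Cantor.to_nat (code_Q x, code_L l)) end.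
Definition code (p : list Q * Q) : nat := Cantor.to_nat (code_L (fst p), code_Q (snd p)).

Lemma code_Z_inj z z' : code_Z z = code_Z z' -> z = z'.
Proof. unfold code_Z. intro H. apply to_nat_inj in H. injection H. lia. Qed.
Lemma code_Q_inj x x' : code_Q x = code_Q x' -> x = x'.
Proof.
  destruct x as [a b], x' as [a' b']. unfold code_Q; cbn [Qnum Qden]. intro H.
  apply to_nat_inj in H. injection H. intros H1 H2.
  apply code_Z_inj in H2. apply Pos2Nat.inj in H1. subst. reflexivity.
Qed.
Lemma code_L_inj l : forall l', code_L l = code_L l' -> l = l'.
Proof.
  induction l as [|x l IH]; intros [|x' l'] H; cbn [code_L] in H; try discriminate; [reflexivity|].
  apply eq_add_S in H. apply to_nat_inj in H. injection H. intros H1 H2.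
  apply code_Q_inj in H2. apply IH in H1. subst. reflexivity.
Qed.
Lemma code_inj p p' : code p = code p' -> p = p'.
Proof.
  intro H. unfold code in H. apply to_nat_inj in H.
  destruct p as [l x], p' as [l' x']. cbn [fst snd] in H. injection H. intros H1 H2.
  apply code_Q_inj in H1. apply code_L_inj in H2. subst. reflexivity.
Qed.

Definition enum (j : nat) : list Q * Q :=
  epsilon (inhabits (nil, 0%Q)) (fun p => code p = j).
Lemma enum_code p : enum (code p) = p.
Proof.
  unfold enum. apply code_inj. apply (epsilon_spec (inhabits (nil, 0%Q)) (fun p' => code p' = code p)).
  exists p. reflexivity.
Qed.

Definition Pj (y : seqR) (j m : nat) (nk : nat * nat) : Prop :=
  let n := fst nk in let k := snd nk in
  let q := fst (enum j) in let eps := snd (enum j) in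
  (n <= k)%nat /\ (m <= n)%nat /\ (m <= k - n)%nat /\
  ((0 < eps)%Q -> sup_close (fun i => 2 ^ n * y i) k q (Q2R eps * inv_sqrt_len q) /\
       tail_norm2 y (k + length q) < Q2R eps * / 2 ^ k).

Theorem lemma8 (y : seqR) (hy : in_l2 y) :
  (forall (q : list Q) (eps : Q) (m : nat), (0 < eps)%Q ->
     exists n k : nat, (n <= k)%nat /\ (m <= n)%nat /\ (m <= k - n)%nat /\
       sup_close (fun i => 2 ^ n * y i) k q (Q2R eps * inv_sqrt_len q) /\
       tail_norm2 y (k + length q) < Q2R eps * / 2 ^ k) ->
  nicely_hypercyclic y.
Proof.
  intro H.
  set (F := fun j m => epsilon (inhabits (0%nat, 0%nat)) (Pj y j m)).
  assert (HP : forall j m, Pj y j m (F j m)).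
  { intros j m. unfold F. apply epsilon_spec.
    destruct (Qlt_le_dec 0 (snd (enum j))) as [Hl|Hl].
    - destruct (H (fst (enum j)) (snd (enum j)) m Hl) as (n & k & A1 & A2 & A3 & A4 & A5).
      exists (n, k). unfold Pj; simpl. tauto.
    - exists (m, (m + m)%nat). unfold Pj; cbn [fst snd].
      split; [lia|split; [lia|split; [lia|]]].
      intro Hc; exfalso; apply (Qle_not_lt _ _ Hl Hc). }
  assert (HF : Fok F).
  { intros j m. destruct (HP j m) as (A1 & A2 & A3 & _). tauto. }
  set (len := fun j => length (fst (enum j))).
  set (w := wR (wb F len)).
  exists w. split.
  { intro i. unfold w, wR. destruct (wb F len i); auto. }
  intros q eps Heps.
  set (j := code (q, eps)).
  assert (Ej : enum j = (q, eps)) by apply enum_code.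
  destruct (construct F len j HF) as (Hc & Hlk & Hper).
  set (m := (length (prefx F len j) + len j + 1)%nat) in *.
  destruct (HP j m) as (A1 & A2 & A3 & A4).
  rewrite Ej in A4; simpl in A4. destruct (A4 Heps) as [Hsup Htail].
  assert (Hlen : len j = length q) by (unfold len; rewrite Ej; reflexivity).
  set (n := fst (F j m)) in *. set (k := snd (F j m)) in *.
  exists k.
  assert (Hnice : nice w (length q) k).
  { intros i Hi. unfold w, wR. rewrite Hper by lia. reflexivity. }
  assert (Hpk : 0 < 2 ^ k) by (apply pow_lt; lra).
  assert (HT : tail_norm2 (Bw_iter w k y) (length q) < Q2R eps).
  { eapply Rle_lt_trans. apply tail_bound. exact hy.
    apply (Rmult_lt_compat_l (2 ^ k)) in Htail; [|exact Hpk].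
    replace (2 ^ k * (Q2R eps * / 2 ^ k)) with (Q2R eps) in Htail by (field; lra).
    exact Htail. }
  split; [|split; [exact Hnice|exact Htail]].
  destruct q as [|a q'].
  - exact HT.
  - split; [|exact HT].
    intros i Hi. rewrite iter_prodw. simpl (0 + i)%nat.
    rewrite (prodw_nice w (length (a :: q')) k i Hnice) by lia.
    unfold w. rewrite prodw_cnt, Hc. fold n. rewrite Nat.add_comm.
    apply Hsup. exact Hi.
Qed.
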